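(* Let $\Gamma\subset\mathrm{SL}_2(\mathbb{R})$ be a Fuchsian group and $k$ an integer. Let $\mathfrak{o}_k=\mathcal{O}\partial_\tau\oplus\mathcal{O}$ be the space of first-order differential operators $f(\tau)\partial_\tau+g(\tau)$ with $f,g$ holomorphic on the upper half-plane $\mathbb{H}$, equipped with the weight-$k$ action $\|_k$ of $\Gamma$. Then the vector subspace $$\mathfrak{d}_k:=\{\,2p(\tau)\partial_\tau+k\,p'(\tau)\;:\;p\in\mathbb{C}[\tau],\ \deg p\le 2\,\}$$ of $\mathfrak{o}_k$ is a $\Gamma$-submodule, i.e. $a\|_k\gamma\in\mathfrak{d}_k$ for all $a\in\mathfrak{d}_k$ and $\gamma\in\Gamma$.
   Context: $\Gamma$ acts on $\mathbb{H}$ by $\gamma\tau=\frac{a\tau+b}{c\tau+d}$ for $\gamma=\begin{psmatrix}a&b\\c&d\end{psmatrix}$, and $j_\gamma(\tau)=c\tau+d$. $\mathcal{O}$ denotes the holomorphic functions on $\mathbb{H}$ and $\mathcal{O}[\partial_\tau]$ the finite-order linear differential operators with coefficients in $\mathcal{O}$. The weight-$k$ action on $\mathcal{O}[\partial_\tau]$ is $(a\|_k\gamma)(\tau,\partial_\tau)=j_\gamma(\tau)^{-k}\,a(\gamma\tau,\partial_{\gamma\tau})\,j_\gamma(\tau)^{k}$, where $j_\gamma^{\pm k}$ act as multiplication operators and $\partial_{\gamma\tau}=(c\tau+d)^2\partial_\tau$. *)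

(* Defs.v *)
From Stdlib Require Import Reals ZArith ClassicalEpsilon.
From Coquelicot Require Import Coquelicot.
Open Scope R_scope.

Record mat2 := Mat2 { ma : R; mb : R; mc : R; md : R }.

Definition mat_id : mat2 := Mat2 1 0 0 1.
Definition mat_mul (g h : mat2) : mat2 :=
  Mat2 (ma g * ma h + mb g * mc h) (ma g * mb h + mb g * md h)
       (mc g * ma h + md g * mc h) (mc g * mb h + md g * md h).
Definition mat_inv_SL2 (g : mat2) : mat2 := Mat2 (md g) (- mb g) (- mc g) (ma g).

Definition is_SL2 (g : mat2) : Prop := ma g * md g - mb g * mc g = 1.

Definition subgroup_SL2 (Gamma : mat2 -> Prop) : Prop :=
  (forall g, Gamma g -> is_SL2 g) /\
  Gamma mat_id /\
  (forall g h, Gamma g -> Gamma h -> Gamma (mat_mul g h)) /\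
  (forall g, Gamma g -> Gamma (mat_inv_SL2 g)).

(** discreteness in the topology of SL_2(R) ⊂ R^4: every point is isolated *)
Definition discrete_set (Gamma : mat2 -> Prop) : Prop :=
  forall g, Gamma g -> exists eps, 0 < eps /\
    forall h, Gamma h ->
      Rabs (ma h - ma g) < eps -> Rabs (mb h - mb g) < eps ->
      Rabs (mc h - mc g) < eps -> Rabs (md h - md g) < eps -> h = g.

Definition fuchsian (Gamma : mat2 -> Prop) : Prop :=
  subgroup_SL2 Gamma /\ discrete_set Gamma.

Definition inH (z : C) : Prop := 0 < Im z.

(** complex derivative (meaningful where f is complex differentiable) *)
Definition cderiv (f : C -> C) (z : C) : C :=
  epsilon (inhabits (RtoC 0))
    (fun l => @is_derive C_AbsRing C_NormedModule f z l).

Definition holo_H (f : C -> C) : Prop :=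
  forall z, inH z -> exists l, @is_derive C_AbsRing C_NormedModule f z l.

Definition Czpow (z : C) (k : Z) : C :=
  match k with
  | Z0 => RtoC 1
  | Zpos n => Cpow z (Pos.to_nat n)
  | Zneg n => Cinv (Cpow z (Pos.to_nat n))
  end.

Definition mobius (g : mat2) (t : C) : C :=
  Cdiv (Cplus (Cmult (RtoC (ma g)) t) (RtoC (mb g)))
       (Cplus (Cmult (RtoC (mc g)) t) (RtoC (md g))).
Definition jfac (g : mat2) (t : C) : C :=
  Cplus (Cmult (RtoC (mc g)) t) (RtoC (md g)).

(** A first-order operator f(tau) d_tau + g(tau), given by its coefficients,
    applied to a function h *)
Definition op_apply (f g : C -> C) (h : C -> C) (t : C) : C :=
  Cplus (Cmult (f t) (cderiv h t)) (Cmult (g t) (h t)).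

(** Weight-k action: (a ||_k gamma) = j^{-k} a(gamma tau, d_{gamma tau}) j^k,
    with d_{gamma tau} = j(tau)^2 d_tau; applied to a function h *)
Definition slash_apply (k : Z) (gam : mat2) (f g : C -> C) (h : C -> C) (t : C) : C :=
  Cmult (Czpow (jfac gam t) (- k))
    (Cplus
      (Cmult (Cmult (f (mobius gam t)) (Cpow (jfac gam t) 2))
             (cderiv (fun s => Cmult (Czpow (jfac gam s) k) (h s)) t))
      (Cmult (g (mobius gam t)) (Cmult (Czpow (jfac gam t) k) (h t)))).

Definition poly2 (p0 p1 p2 : C) (t : C) : C :=
  Cplus p0 (Cplus (Cmult p1 t) (Cmult p2 (Cmult t t))).
Definition poly2' (p0 p1 p2 : C) (t : C) : C :=
  Cplus p1 (Cmult (RtoC 2) (Cmult p2 t)).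

Definition dk_f (p0 p1 p2 : C) (t : C) : C := Cmult (RtoC 2) (poly2 p0 p1 p2 t).
Definition dk_g (k : Z) (p0 p1 p2 : C) (t : C) : C :=
  Cmult (RtoC (IZR k)) (poly2' p0 p1 p2 t).

(* Main.v *)
Require Import Defs.
From Stdlib Require Import Reals ZArith Lra ClassicalEpsilon.
From Coquelicot Require Import Coquelicot.
Open Scope C_scope.
Lemma der_inv (w : C) : w <> 0 ->
  @is_derive C_AbsRing C_NormedModule Cinv w (- / (w * w)).
Proof.
  intros Hw. split. apply is_linear_scal_l.
  intros x Hx. apply (@is_filter_lim_locally_unique C_AbsRing (AbsRing_NormedModule C_AbsRing)) in Hx. subst x.
  intros eps.
  pose proof (proj1 (Cmod_gt_0 w) Hw) as Hm.
  assert (Hd : (0 < Rmin (Cmod w / 2) (eps * (Cmod w * Cmod w * Cmod w) / 2))%R).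
  { apply Rmin_pos. lra. pose proof (cond_pos eps). apply Rmult_lt_0_compat; [|lra].
    repeat apply Rmult_lt_0_compat; auto. }
  exists (mkposreal _ Hd). intros y Hy. change (Cmod (y - w) < Rmin (Cmod w / 2) (eps * (Cmod w * Cmod w * Cmod w) / 2))%R in Hy.
  change (Cmod (Cinv y - Cinv w - (y - w) * (- / (w*w))) <= eps * Cmod (y - w))%R.
  assert (Hyw1 : (Cmod (y - w) < Cmod w / 2)%R) by (eapply Rlt_le_trans; [apply Hy|apply Rmin_l]).
  assert (Hyw2 : (Cmod (y - w) < eps * (Cmod w * Cmod w * Cmod w) / 2)%R) by (eapply Rlt_le_trans; [apply Hy|apply Rmin_r]).
  assert (Hy2 : (Cmod w / 2 <= Cmod y)%R).
  { pose proof (Cmod_triangle y (w - y)) as T.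
    replace (y + (w - y)) with w in T by ring.
    replace (w - y) with (- (y - w)) in T by ring. rewrite Cmod_opp in T. lra. }
  assert (Hy0 : (y:C) <> RtoC 0). { apply Cmod_gt_0. lra. }
  replace (Cinv y - Cinv w - (y - w) * (- / (w*w))) with ((y - w) * (y - w) / (y * w * w)) by (field; auto).
  rewrite Cmod_div by (repeat apply Cmult_neq_0; auto).
  rewrite !Cmod_mult.
  pose proof (Cmod_ge_0 (y - w)) as H0.
  set (u := Cmod (y - w)) in *. set (m := Cmod w) in *. set (n := Cmod y) in *.
  apply Rle_trans with (u * (eps * (m*m*m)/2) / (m/2 * m * m))%R.
  - unfold Rdiv. apply Rmult_le_compat; try lra.
    + apply Rmult_le_pos; lra.
    + left; apply Rinv_0_lt_compat. repeat apply Rmult_lt_0_compat; lra.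
    + apply Rmult_le_compat_l; lra.
    + apply Rinv_le_contravar. repeat apply Rmult_lt_0_compat; lra.
      repeat apply Rmult_le_compat_r; lra.
  - right. field. lra.
Qed.

Lemma der_to_abs f z l : @is_derive C_AbsRing C_NormedModule f z l -> @is_derive C_AbsRing (AbsRing_NormedModule C_AbsRing) f z l.
Proof. intros H. unfold is_derive, filterdiff in *. destruct H as [[H1 H2 H3] H4].
split; [split|]; [exact H1|exact H2|exact H3|exact H4]. Qed.
Lemma der_of_abs f z l : @is_derive C_AbsRing (AbsRing_NormedModule C_AbsRing) f z l -> @is_derive C_AbsRing C_NormedModule f z l.
Proof. intros H. unfold is_derive, filterdiff in *. destruct H as [[H1 H2 H3] H4].
split; [split|]; [exact H1|exact H2|exact H3|exact H4]. Qed.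

Lemma cderiv_eq (f : C -> C) (z l : C) :
  @is_derive C_AbsRing C_NormedModule f z l -> cderiv f z = l.
Proof.
  intros H. unfold cderiv.
  pose proof (epsilon_spec (inhabits (RtoC 0))
    (fun l => @is_derive C_AbsRing C_NormedModule f z l) (ex_intro _ l H)) as HH. cbv beta in HH.
  rewrite <- (is_C_derive_unique _ _ _ H). rewrite <- (is_C_derive_unique _ _ _ HH). reflexivity.
Qed.

Lemma der_ext (f : C -> C) (z l l' : C) :
  @is_derive C_AbsRing C_NormedModule f z l -> l = l' ->
  @is_derive C_AbsRing C_NormedModule f z l'.
Proof. intros H ->. exact H. Qed.

Lemma der_mult (f g : C -> C) (z df dg : C) :
  @is_derive C_AbsRing C_NormedModule f z df ->
  @is_derive C_AbsRing C_NormedModule g z dg ->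
  @is_derive C_AbsRing C_NormedModule (fun s => f s * g s) z (df * g z + f z * dg).
Proof.
  intros Hf Hg.
  apply der_to_abs in Hf. apply der_to_abs in Hg. apply der_of_abs.
  apply (@is_derive_mult C_AbsRing f g z df dg Hf Hg).
  intros; apply Cmult_comm.
Qed.

Lemma der_id (z : C) : @is_derive C_AbsRing C_NormedModule (fun s => s) z (RtoC 1).
Proof. apply der_of_abs. apply (@is_derive_id C_AbsRing). Qed.
Lemma der_const (a z : C) : @is_derive C_AbsRing C_NormedModule (fun _ => a) z (RtoC 0).
Proof. apply (@is_derive_const C_AbsRing C_NormedModule). Qed.
Lemma der_plus (f g : C -> C) (z df dg : C) :
  @is_derive C_AbsRing C_NormedModule f z df ->
  @is_derive C_AbsRing C_NormedModule g z dg ->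
  @is_derive C_AbsRing C_NormedModule (fun s => f s + g s) z (df + dg).
Proof. intros Hf Hg. apply (@is_derive_plus C_AbsRing C_NormedModule f g z df dg Hf Hg). Qed.

Lemma der_j (gam : mat2) (t : C) :
  @is_derive C_AbsRing C_NormedModule (jfac gam) t (RtoC (mc gam)).
Proof.
  unfold jfac.
  eapply der_ext.
  apply der_plus. apply der_mult. apply der_const. apply der_id. apply der_const.
  cbv beta. change (RtoC 0 * t + RtoC (mc gam) * RtoC 1 + RtoC 0 = RtoC (mc gam)). ring.
Qed.

Lemma der_jpow (gam : mat2) (t : C) (n : nat) : jfac gam t <> RtoC 0 ->
  @is_derive C_AbsRing C_NormedModule (fun s => Cpow (jfac gam s) n) t
    (RtoC (INR n) * RtoC (mc gam) * Cpow (jfac gam t) n / jfac gam t).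
Proof.
  intros Hj. induction n as [|n IH].
  - apply der_ext with (l := RtoC 0). change (@is_derive C_AbsRing C_NormedModule (fun _ => RtoC 1) t (RtoC 0)). apply der_const. simpl. field. exact Hj.
  - apply der_ext with (l := RtoC (mc gam) * Cpow (jfac gam t) n + jfac gam t *
        (RtoC (INR n) * RtoC (mc gam) * Cpow (jfac gam t) n / jfac gam t)).
    change (@is_derive C_AbsRing C_NormedModule (fun s => jfac gam s * Cpow (jfac gam s) n) t
      (RtoC (mc gam) * Cpow (jfac gam t) n + jfac gam t *
        (RtoC (INR n) * RtoC (mc gam) * Cpow (jfac gam t) n / jfac gam t))).
    apply der_mult. apply der_j. exact IH.
    rewrite S_INR, RtoC_plus. simpl. field. exact Hj.
Qed.

Lemma der_zpow (gam : mat2) (t : C) (k : Z) : jfac gam t <> RtoC 0 ->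
  @is_derive C_AbsRing C_NormedModule (fun s => Czpow (jfac gam s) k) t
    (RtoC (IZR k) * RtoC (mc gam) * Czpow (jfac gam t) k / jfac gam t).
Proof.
  intros Hj. destruct k as [|p|p]; simpl.
  - apply der_ext with (l := RtoC 0). change (@is_derive C_AbsRing C_NormedModule (fun _ => RtoC 1) t (RtoC 0)). apply der_const. field. exact Hj.
  - eapply der_ext. apply der_jpow. exact Hj. rewrite INR_IPR. reflexivity.
  - pose proof (Cpow_nz _ (Pos.to_nat p) Hj) as Hn.
    eapply der_ext.
    apply (@is_derive_comp C_AbsRing C_NormedModule Cinv (fun s => Cpow (jfac gam s) (Pos.to_nat p))).
    apply der_inv. exact Hn.
    apply der_to_abs. apply der_jpow. exact Hj.
    change (RtoC (INR (Pos.to_nat p)) * RtoC (mc gam) * Cpow (jfac gam t) (Pos.to_nat p) / jfac gam t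
      * (- / (Cpow (jfac gam t) (Pos.to_nat p) * Cpow (jfac gam t) (Pos.to_nat p)))
      = RtoC (IZR (Zneg p)) * RtoC (mc gam) * / Cpow (jfac gam t) (Pos.to_nat p) / jfac gam t).
    rewrite INR_IPR. change (IZR (Z.neg p)) with (Ropp (IPR p)). rewrite RtoC_opp. field. split; assumption.
Qed.

Lemma eq_by_det (X Y E W : C) : X - Y = E * W -> E = RtoC 0 -> X = Y.
Proof.
  intros H1 H2. rewrite H2 in H1.
  replace X with (Y + (X - Y)) by ring. rewrite H1. ring.
Qed.

Lemma Czpow_opp (z : C) (k : Z) : z <> RtoC 0 ->
  Czpow z (- k) = / Czpow z k /\ Czpow z k <> RtoC 0.
Proof.
  intros Hz. destruct k as [|p|p]; simpl.
  - split. field. apply C1_nz.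
  - pose proof (Cpow_nz z (Pos.to_nat p) Hz). split. reflexivity. exact H.
  - pose proof (Cpow_nz z (Pos.to_nat p) Hz). split. field. exact H.
    intro H0. apply C1_nz. rewrite <- (Cinv_r _ H), H0. ring.
Qed.

Theorem lemma2p1 :
  forall (Gamma : mat2 -> Prop), fuchsian Gamma ->
  forall (k : Z) (gam : mat2), Gamma gam ->
  forall p0 p1 p2 : C,
  exists q0 q1 q2 : C,
    forall h : C -> C, holo_H h ->
    forall t : C, inH t ->
      slash_apply k gam (dk_f p0 p1 p2) (dk_g k p0 p1 p2) h t =
      op_apply (dk_f q0 q1 q2) (dk_g k q0 q1 q2) h t.
Proof.
  intros Gamma [[HSL _] _] k gam Hg p0 p1 p2.
  pose proof (HSL gam Hg) as Hdet. unfold is_SL2 in Hdet.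
  set (A := RtoC (ma gam)). set (B := RtoC (mb gam)).
  set (Cc := RtoC (mc gam)). set (D := RtoC (md gam)).
  exists (p0 * (D * D) + p1 * (B * D) + p2 * (B * B)).
  exists (RtoC 2 * p0 * Cc * D + p1 * (A * D + B * Cc) + RtoC 2 * p2 * A * B).
  exists (p0 * (Cc * Cc) + p1 * (A * Cc) + p2 * (A * A)).
  intros h Hh t Ht.
  assert (Hj : jfac gam t <> RtoC 0).
  { destruct t as [x y]. unfold inH in Ht. simpl in Ht.
    unfold jfac. intro H0. injection H0. simpl. intros E1 E2.
    assert (mc gam = 0)%R by nra. subst. 
    rewrite H in E2, Hdet. nra. }
  destruct (Hh t Ht) as [l Hl].
  assert (E1 : cderiv h t = l) by (apply cderiv_eq; exact Hl).
  assert (E2 : cderiv (fun s => Czpow (jfac gam s) k * h s) t =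
     RtoC (IZR k) * RtoC (mc gam) * Czpow (jfac gam t) k / jfac gam t * h t
     + Czpow (jfac gam t) k * l).
  { apply cderiv_eq. apply der_mult. apply der_zpow. exact Hj. exact Hl. }
  destruct (Czpow_opp (jfac gam t) k Hj) as [E3 Hz].
  unfold slash_apply, op_apply. rewrite E1, E2, E3.
  unfold dk_f, dk_g, poly2, poly2', mobius. fold (jfac gam t).
  clear E1 E2 E3. unfold jfac in *. subst A B Cc D.
  revert Hz. generalize (Czpow (RtoC (mc gam) * t + RtoC (md gam)) k). intros Z Hz.
  set (K := RtoC (IZR k)). set (H := h t).
  apply (eq_by_det _ _ (RtoC (ma gam) * RtoC (md gam) - RtoC (mb gam) * RtoC (mc gam) - RtoC 1)
    (- (K * H * (p1 + RtoC 2 * p2 * (RtoC (ma gam) * t + RtoC (mb gam)) / (RtoC (mc gam) * t + RtoC (md gam)))))).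
  - field. split; assumption.
  - rewrite <- !RtoC_mult, <- !RtoC_minus, Hdet. replace (1 - 1)%R with 0%R by ring. reflexivity.
Qed.
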